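(* Let $(\mathcal{X},\mathcal{Y},\mathcal{I})$ be a $(v,b,r,\lambda)$-RPBD. Suppose there exists an integer $k$ such that $$[b:r:\lambda]=\left[\frac{v}{k}\frac{v-1}{k-1}:\frac{v-1}{k-1}:1\right].$$ Then $|\mathcal{I}^y|=k$ for every $y\in\mathcal{Y}$, and hence $(\mathcal{X},\mathcal{Y},\mathcal{I})$ is a $(v,b,r,k,\lambda)$-block design.
   Context: For an incidence structure $(\mathcal{X},\mathcal{Y},\mathcal{I})$ with $\mathcal{I}\subset\mathcal{X}\times\mathcal{Y}$, $\mathcal{I}_x=\{y:(x,y)\in\mathcal{I}\}$ and $\mathcal{I}^y=\{x:(x,y)\in\mathcal{I}\}$. For integers $v>0$, $b>r>\lambda\ge0$, a $(v,b,r,\lambda)$-RPBD is an incidence structure with $\mathcal{X},\mathcal{Y}$ nonempty finite, $|\mathcal{X}|=v$, $|\mathcal{Y}|=b$, $|\mathcal{I}_x|=r$ for all $x$, $|\mathcal{I}_x\cap\mathcal{I}_{x'}|=\lambda$ for all $x\neq x'$. A $(v,b,r,k,\lambda)$-block design is such an incidence structure that in addition satisfies $|\mathcal{I}^y|=k$ for all $y$ (with $v>k>0$). The ratio equality $[a_1:a_2:a_3]=[c_1:c_2:c_3]$ means $(a_1,a_2,a_3)=t(c_1,c_2,c_3)$ for some $t>0$. *)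

(* Defs.v *)
From HB Require Import structures.
From mathcomp Require Import all_boot all_order all_algebra.
Set Implicit Arguments. Unset Strict Implicit. Unset Printing Implicit Defensive.
Import Order.TTheory GRing.Theory Num.Theory.

(* Incidence structure (X, Y, I): X, Y finite types, I : X -> Y -> bool
   (I x y  <=>  (x,y) \in I).
   I_x = [set y | I x y],  I^y = [set x | I x y]. *)
Definition Irow (X Y : finType) (I : X -> Y -> bool) (x : X) : {set Y} :=
  [set y | I x y].
Definition Icol (X Y : finType) (I : X -> Y -> bool) (y : Y) : {set X} :=
  [set x | I x y].

Definition is_RPBD (X Y : finType) (I : X -> Y -> bool) (v b r lam : nat) : Prop :=
  [/\ (0 < v)%N /\ (lam < r < b)%N, #|X| = v, #|Y| = b,
      (forall x : X, #|Irow I x| = r) &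
      (forall x x' : X, x != x' -> #|Irow I x :&: Irow I x'| = lam)].

Definition is_block_design (X Y : finType) (I : X -> Y -> bool)
    (v b r k lam : nat) : Prop :=
  [/\ is_RPBD I v b r lam, (0 < k < v)%N & (forall y : Y, #|Icol I y| = k)].

Definition ratio_eq (a1 a2 a3 c1 c2 c3 : rat) : Prop :=
  exists t : rat, (0 < t)%R /\ a1 = (t * c1)%R /\ a2 = (t * c2)%R /\ a3 = (t * c3)%R.

(* Main.v *)
Require Import Defs.
From HB Require Import structures.
From mathcomp Require Import all_boot all_order all_algebra ring lra.
Import Order.TTheory GRing.Theory Num.Theory.

Lemma cardIcol (X Y : finType) (I : X -> Y -> bool) y :
  #|Icol I y| = (\sum_x (I x y : nat))%N.
Proof. rewrite -sum1_card big_mkcond /=; apply: eq_bigr => x _; rewrite inE; by case: (I x y). Qed.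
Lemma cardIrow (X Y : finType) (I : X -> Y -> bool) x :
  #|Irow I x| = (\sum_y (I x y : nat))%N.
Proof. rewrite -sum1_card big_mkcond /=; apply: eq_bigr => y _; rewrite inE; by case: (I x y). Qed.
Lemma cardIrow2 (X Y : finType) (I : X -> Y -> bool) x x' :
  #|Irow I x :&: Irow I x'| = (\sum_y (I x y : nat) * (I x' y : nat))%N.
Proof. rewrite -sum1_card big_mkcond /=; apply: eq_bigr => y _; rewrite !inE; by case: (I x y); case: (I x' y). Qed.

Lemma S1 (X Y : finType) (I : X -> Y -> bool) v b r lam :
  is_RPBD I v b r lam -> (\sum_y #|Icol I y| = v * r)%N.
Proof.
case=> _ hv _ hr _.
under eq_bigr => y _ do rewrite cardIcol.
rewrite exchange_big /=.
under eq_bigr => x _ do rewrite -cardIrow hr.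
by rewrite sum_nat_const hv.
Qed.

Lemma S2 (X Y : finType) (I : X -> Y -> bool) v b r lam :
  is_RPBD I v b r lam -> (\sum_y #|Icol I y| ^ 2 = v * r + v * (v - 1) * lam)%N.
Proof.
case=> _ hv _ hr hl.
under eq_bigr => y _ do rewrite cardIcol expnS expn1 big_distrl /=.
under eq_bigr => y _ do under eq_bigr => x _ do rewrite big_distrr /=.
rewrite exchange_big /=.
under eq_bigr => x _ do rewrite exchange_big /=.
under eq_bigr => x _ do under eq_bigr => x' _ do rewrite -cardIrow2.
rewrite -hv -mulnA -mulnDr -sum_nat_const.
apply: eq_bigr => x _.
rewrite (bigD1 x) //= setIid hr; congr (_ + _)%N.
rewrite (eq_bigr (fun _ => lam)); last by move=> x' hx'; rewrite hl // eq_sym.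
by rewrite sum_nat_const cardC1 subn1.
Qed.

Local Open Scope ring_scope.
Theorem proposition3 (X Y : finType) (I : X -> Y -> bool) (v b r lam : nat)
    (k : int) :
  is_RPBD I v b r lam ->
  (k != 0)%R -> (k != 1)%R ->
  ratio_eq b%:R r%:R lam%:R
    ((v%:R / k%:~R) * ((v%:R - 1) / (k%:~R - 1)))%R
    ((v%:R - 1) / (k%:~R - 1))%R
    1%R ->
  (forall y : Y, (#|Icol I y|%:Z = k)%R) /\
  is_block_design I v b r `|k|%N lam.
Proof.
move=> hR hk0 hk1 [t [ht [hb [hr hl]]]].
have hS1 := @S1 _ _ _ _ _ _ _ hR; have hS2 := @S2 _ _ _ _ _ _ _ hR.
have hR' := hR; case: hR' => [[hv0 /andP[hlr hrb]] hv hYb hr' hl'].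
set kq : rat := k%:~R.
have kq0 : kq != 0 by rewrite intr_eq0.
have kq1 : kq - 1 != 0 by rewrite /kq -[1 : rat]/(1%:~R) -intrB intr_eq0 subr_eq0.
rewrite mulr1 in hl.
have E1 : r%:R * (kq - 1) = lam%:R * (v%:R - 1) :> rat.
  by rewrite hr hl -/kq; field; rewrite ?kq0 ?kq1.
have E2 : b%:R * kq = v%:R * r%:R :> rat.
  by rewrite hb hr -/kq; field; rewrite ?kq0 ?kq1.
have Q1 : \sum_y (#|Icol I y|%:R : rat) = v%:R * r%:R.
  by rewrite -natr_sum hS1 natrM.
have Q2 : \sum_y (#|Icol I y|%:R : rat) ^+ 2 = v%:R * r%:R + v%:R * (v%:R - 1) * lam%:R.
  rewrite -(eq_bigr _ (fun y _ => natrX _ _ _)) -natr_sum hS2.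
  by rewrite natrD !natrM natrB // ?natr1.
have Z : \sum_y ((#|Icol I y|%:R : rat) - kq) ^+ 2 = 0.
  rewrite (eq_bigr (fun y => (#|Icol I y|%:R : rat) ^+ 2 + (- (2 * kq)) * #|Icol I y|%:R + kq ^+ 2)); last by move=> y _; ring.
  rewrite !big_split /= -mulr_sumr sumr_const Q1 Q2 hYb.
  have -> : forall z : rat, z *+ b = b%:R * z by move=> z; rewrite mulr_natl.
  have -> : v%:R * r%:R + v%:R * (v%:R - 1) * lam%:R + - (2 * kq) * (v%:R * r%:R) + b%:R * kq ^+ 2
     = v%:R * (lam%:R * (v%:R - 1) - r%:R * (kq - 1)) - kq * (v%:R * r%:R - b%:R * kq) :> rat by ring.
  by rewrite E1 E2 !subrr; ring.
have Hy : forall y, (#|Icol I y|%:R : rat) = kq.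
  move=> y; apply/eqP; rewrite -subr_eq0 -sqrf_eq0; apply/eqP.
  by apply: (psumr_eq0P _ Z) => // i _; apply: sqr_ge0.
have Hz : forall y : Y, (#|Icol I y|%:Z = k).
  by move=> y; apply: (@intr_inj rat); rewrite /= -pmulrn Hy.
split=> //.
have : (0 < #|Y|)%N by rewrite hYb; apply: leq_ltn_trans hrb.
case/card_gt0P => y0 _.
have Hk : `|k|%N = #|Icol I y0| by rewrite -(Hz y0) absz_nat.
split=> //; last by move=> y; rewrite Hk; apply/eqP; rewrite -eqz_nat !Hz.
rewrite Hk; apply/andP; split.
  by rewrite lt0n; apply/eqP => h; move: hk0; rewrite -(Hz y0) h.
rewrite ltn_neqAle -{2}hv max_card andbT; apply/eqP => hvk.
have v1 : (v%:R - 1 : rat) != 0.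
  rewrite subr_eq0 pnatr_eq1; apply/eqP => h; move: hk1.
  by rewrite -(Hz y0) hvk h.
have : r%:R = lam%:R :> rat.
  by apply: (mulIf v1); rewrite -E1 -(Hy y0) hvk.
move/eqP; rewrite eqr_nat => /eqP h; by rewrite h ltnn in hlr.
Qed.
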